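(* For plane binary tree shapes $t$ let $S_t$, $T$ be as in the context. Then \[ \sum_{\substack{t \in \mathcal{B}_{\le n}\\ |t| \ge \log_4 n}} \left(1 - \frac{[z^n]S_t(z)}{[z^n]T(z)}\right) = \mathcal{O}\!\left(\frac{n}{\log n}\right) \quad \text{as } n\to\infty . \]
   Context: A plane binary tree is a rooted tree in which each node has a left and a right slot, each empty or holding a subtree; $\mathcal{B}_{\le n}$ is the set of (unlabeled) plane binary trees with at most $n$ nodes, and $|t|$ is the number of nodes. A plane increasing binary tree of size $n$ is a plane binary tree whose $n$ nodes are labeled $1,\dots,n$ increasingly along every path from the root; their exponential generating function is $T(z)=z/(1-z)$, so $[z^n]T(z)=1$. A fringe subtree is a node with all its descendants; its shape is obtained by forgetting labels. For a shape $t$ with $k$ nodes, $\ell(t)$ is its number of increasing labelings (equal to $k!$ divided by the product of the sizes of all fringe subtrees of $t$) and $w(t)=\ell(t)/k!$. $S_t(z)$ is the exponential generating function of plane increasing binary trees having no fringe subtree of shape $t$; it is the power series solution of $S_t'(z)=(1+S_t(z))^2-w(t)kz^{k-1}$, $S_t(0)=0$. *)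

(* Defs.v *)
From HB Require Import structures.
From mathcomp Require Import all_boot all_order all_algebra.
From mathcomp Require Import all_classical all_reals all_analysis.
Set Implicit Arguments. Unset Strict Implicit. Unset Printing Implicit Defensive.
Import Order.TTheory GRing.Theory Num.Theory.
Local Open Scope ring_scope.

(* Plane binary trees: [Leaf] is an empty slot, [Node l r] a node with left
   and right slots holding l and r. *)
Inductive btree := Leaf | Node of btree & btree.

Fixpoint btree_eqb (s t : btree) : bool :=
  match s, t with
  | Leaf, Leaf => true
  | Node s1 s2, Node t1 t2 => btree_eqb s1 t1 && btree_eqb s2 t2
  | _, _ => false
  end.

Lemma btree_eqP : Equality.axiom btree_eqb.
Proof.
elim=> [|s1 IH1 s2 IH2] [|t1 t2] /=; try by constructor.
apply: (iffP andP) => [[/(IH1 t1) -> /(IH2 t2) ->] //|[<- <-]].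
by split; [apply/(IH1 s1)|apply/(IH2 s2)].
Qed.
HB.instance Definition _ := hasDecEq.Build btree btree_eqP.

Fixpoint bsize (t : btree) : nat :=
  match t with Leaf => 0%N | Node l r => (bsize l + bsize r).+1 end.

Fixpoint hook (t : btree) : nat :=
  match t with Leaf => 1%N | Node l r => (bsize t * hook l * hook r)%N end.

(* l(t): number of increasing labelings = |t|! / prod of fringe-subtree sizes *)
Definition ell (t : btree) : nat := ((bsize t)`! %/ hook t)%N.

Definition wt {R : realType} (t : btree) : R := (ell t)%:R / ((bsize t)`!)%:R.

(* B_{<= n}: list of all plane binary trees with at most n nodes
   (including the empty tree Leaf), each exactly once. *)
Fixpoint trees_le (n : nat) : seq btree :=
  match n with
  | 0 => [:: Leaf]
  | m.+1 => Leaf :: [seq Node lr.1 lr.2 |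
                     lr <- [seq (l, r) | l <- trees_le m, r <- trees_le m]
                     & (bsize lr.1 + bsize lr.2 <= m)%N]
  end.

(* Formal power series over R, represented by coefficient sequences. *)
Definition fps_mul {R : realType} (a b : nat -> R) (m : nat) : R :=
  \sum_(i < m.+1) a i * b (m - i)%N.
Definition fps_deriv {R : realType} (a : nat -> R) (m : nat) : R :=
  m.+1%:R * a m.+1.
Definition fps_1plus {R : realType} (a : nat -> R) (m : nat) : R :=
  (m == 0%N)%:R + a m.

(* S is the (coefficient sequence of the) power series solution of
   S'(z) = (1 + S(z))^2 - w(t) k z^(k-1),  S(0) = 0,  k = |t|. *)
Definition is_S_t {R : realType} (t : btree) (S : nat -> R) : Prop :=
  S 0%N = 0 /\
  forall m : nat,
    fps_deriv S m =
      fps_mul (fps_1plus S) (fps_1plus S) m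
      - (if m == (bsize t).-1 then wt t * (bsize t)%:R else 0).

(* [z^n] T(z) for T(z) = z/(1-z) *)
Definition Tcoef {R : realType} (n : nat) : R := if n == 0%N then 0 else 1.

Definition log4 {R : realType} (x : R) : R := ln x / ln 4.

(* Main.v *)
Require Import Defs.
From mathcomp Require Import all_boot all_order all_algebra.
From mathcomp Require Import all_classical all_reals all_analysis.
From mathcomp Require Import ring lra zify.
Set Implicit Arguments. Unset Strict Implicit. Unset Printing Implicit Defensive.
Import Order.TTheory GRing.Theory Num.Theory.
Local Open Scope ring_scope.

Ltac nz k := repeat (apply/andP; split); apply: lt0r_neq0;
  have := ler0n _ k; lra.

Definition hfun {R : realType} (k n : nat) : R :=
  if (n < k)%N then 0 else if n == k then 1
  else 2 * n.+1%:R / (k.+1%:R * k.+2%:R).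

Lemma hfun_ge0 {R : realType} k n : 0 <= hfun (R:=R) k n.
Proof.
rewrite /hfun; case: ifP => // _; case: ifP => // _.
all: try exact: divr_ge0.
Qed.

Lemma hsum {R : realType} k n :
  \sum_(i < n) hfun (R:=R) k i =
  if (n <= k)%N then 0 else n%:R * n.+1%:R / (k.+1%:R * k.+2%:R).
Proof.
have hk : (k.+1%:R * k.+2%:R : R) != 0 by rewrite -natrM pnatr_eq0.
elim: n => [|n IH]; first by rewrite big_ord0.
rewrite big_ord_recr /= IH /hfun.
case: (ltngtP n k) => [lt|gt|->].
- by rewrite addr0.
- rewrite -[n.+2]addn2 -[n.+1]addn1 -[k.+2]addn2 -[k.+1]addn1 !natrD.
  field. repeat (apply/andP; split); apply: lt0r_neq0; have := ler0n R k; move=> ?; lra.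
- rewrite divff //; lra.
Qed.

Lemma hrec {R : realType} k m : (1 <= k)%N ->
  m.+1%:R * hfun (R:=R) k m.+1 =
  2 * \sum_(i < m.+1) hfun k i + (if m == k.-1 then k%:R else 0).
Proof.
move=> k1.
have E : (m == k.-1) = (m.+1 == k) by case: k k1.
rewrite E hsum /hfun.
case: (ltngtP m.+1 k) => [lt|gt|<-].
- ring.
- ring.
- ring.
Qed.

Lemma hook_gt0 t : (0 < hook t)%N.
Proof. by elim: t => //= l IHl r IHr; rewrite !muln_gt0 IHl IHr. Qed.

Lemma wt_ge0 {R : realType} t : 0 <= wt (R:=R) t.
Proof. by rewrite /wt divr_ge0. Qed.

Lemma wt_le1 {R : realType} t : wt (R:=R) t <= 1.
Proof.
rewrite /wt ler_pdivrMr ?mul1r ?ltr0n ?fact_gt0 // ler_nat /ell.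
exact: leq_div.
Qed.

Lemma wt_le_hook {R : realType} t : wt (R:=R) t <= (hook t)%:R^-1.
Proof.
have h0 := hook_gt0 t.
rewrite /wt ler_pdivrMr ?ltr0n ?fact_gt0 // mulrC ler_pdivlMr ?ltr0n //.
by rewrite -natrM ler_nat /ell leq_divM.
Qed.

Lemma per_tree {R : realType} (t : btree) (S : nat -> R) :
  (1 <= bsize t)%N -> is_S_t t S ->
  forall n, (1 <= n)%N -> 0 <= 1 - S n <= wt t * hfun (bsize t) n.
Proof.
move=> k1 [S0 HS].
set k := bsize t in k1 HS *.
set w := wt t.
have w0 : 0 <= w := wt_ge0 t.
have w1 : w <= 1 := wt_le1 t.
pose fp := fps_1plus S.
have fpS j : fp j.+1 = S j.+1 by rewrite /fp /fps_1plus /= add0r.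
suff key : forall m j, (j <= m)%N -> 0 <= fp j <= 1 /\ 1 - fp j <= w * hfun k j.
  case=> // n _; have [/andP[_ h1] h2] := key n.+1 n.+1 (leqnn _).
  by rewrite -fpS h2 andbT subr_ge0.
elim=> [|m IH] j.
  rewrite leqn0 => /eqP ->.
  rewrite /fp /fps_1plus S0 /= addr0 subrr /hfun k1 mulr0.
  by split; rewrite ?ler01 ?lexx.

rewrite leq_eqVlt => /orP[/eqP ->|]; last exact: IH.
have Hm := HS m.
rewrite /fps_deriv /fps_mul -/fp in Hm.
set E := \sum_(i < m.+1) fp i * fp (m - i)%N in Hm.
have B i : (i <= m)%N -> 0 <= fp i <= 1 /\ 1 - fp i <= w * hfun k i := IH i.
have E0 : 0 <= E.
  apply: sumr_ge0 => i _.
  have [/andP[a0 _] _] := B i (ltn_ord i).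
  have [/andP[b0 _] _] := B (m - i)%N (leq_subr _ _).
  exact: mulr_ge0.
have EM : E <= m.+1%:R.
  have <- : \sum_(i < m.+1) (1:R) = m.+1%:R by rewrite sumr_const card_ord.
  apply: ler_sum => i _.
  have [/andP[a0 a1] _] := B i (ltn_ord i).
  have [/andP[b0 b1] _] := B (m - i)%N (leq_subr _ _).
  nra.
have EL : m.+1%:R - E <= 2 * w * \sum_(i < m.+1) hfun k i.
  have -> : m.+1%:R - E = \sum_(i < m.+1) (1 - fp i * fp (m - i)%N).
    by rewrite sumrB sumr_const card_ord.
  have -> : 2 * w * \sum_(i < m.+1) hfun k i =
      \sum_(i < m.+1) (w * hfun k i + w * hfun k (m - i)%N).
    rewrite big_split /= -!mulr_sumr.
    rewrite [X in _ = _ + w * X](reindex_inj rev_ord_inj) /=.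
    rewrite [X in _ = _ + w * X](eq_bigr (fun i : 'I_m.+1 => hfun k i)); first by ring.
    by move=> i _; rewrite subSS subKn // -ltnS.
  apply: ler_sum => i _.
  have [/andP[a0 a1] a2] := B i (ltn_ord i).
  have [/andP[b0 b1] b2] := B (m - i)%N (leq_subr _ _).
  nra.
have HR := hrec (R:=R) m k1.
have m0 : (0 : R) < m.+1%:R by rewrite ltr0n.
rewrite fpS.
have Hm' : m.+1%:R * S m.+1 = E - (if m == k.-1 then w * k%:R else 0) by [].
split; last first.
  rewrite -(ler_pM2l m0) mulrBr mulr1 Hm' mulrCA HR.
  case: (m == k.-1); nra.
apply/andP; split.
  rewrite -(ler_pM2l m0) mulr0 Hm'.
  case: eqP => [mk|_]; last by rewrite subr0.
  have : \sum_(i < m.+1) hfun (R:=R) k i = 0 by rewrite hsum mk prednK // leqnn.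
  have -> : k%:R = m.+1%:R :> R by rewrite mk prednK.
  move=> h; rewrite h mulr0 in EL; nra.
rewrite -(ler_pM2l m0) mulr1 Hm'.
case: ifP => _; last by rewrite subr0.
have : 0 <= w * k%:R by apply: mulr_ge0.
lra.
Qed.

Lemma sum_ind {R : realType} (x N : nat) (g : R) :
  \sum_(a < N) (if x == a then g else 0) = if (x < N)%N then g else 0.
Proof.
elim: N => [|N IH]; first by rewrite big_ord0.
rewrite big_ord_recr /= IH ltnS.
case: (ltngtP x N) => [hlt|hgt|eN]; rewrite ?addr0 ?add0r //.
Qed.

Lemma group_lt {R : realType} (s : seq btree) (G : btree -> R) N :
  \sum_(t <- s) (if (bsize t < N)%N then G t else 0) =
  \sum_(a < N) \sum_(t <- s) (if bsize t == a then G t else 0).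
Proof.
elim: s => [|x s IH].
  by rewrite big_nil big1 // => a _; rewrite big_nil.
rewrite big_cons IH.
under [RHS]eq_bigr do rewrite big_cons.
by rewrite big_split /= sum_ind.
Qed.

Lemma A_eq {R : realType} n k : (k <= n)%N ->
  \sum_(t <- trees_le n) (if bsize t == k then (hook t)%:R^-1 else 0) = 1 :> R.
Proof.
elim: n k => [|n IH] k.
  by rewrite leqn0 => /eqP ->; rewrite big_cons big_nil /= invr1 addr0.
move=> kn.
rewrite /= big_cons big_map big_filter big_mkcond big_allpairs /=.
case: k kn => [|k] kn.
  rewrite /= invr1 big1 ?addr0 // => l _; rewrite big1 // => r _.
  by case: ifP.
rewrite /= add0r.
have kn' : (k <= n)%N by [].
transitivity (\sum_(l <- trees_le n)
   (if (bsize l < k.+1)%N then k.+1%:R^-1 * (hook l)%:R^-1 else 0) : R).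
  apply: eq_bigr => l _.
  case: (ltnP (bsize l) k.+1) => hl.
    have I1 := IH (k - bsize l)%N (leq_trans (leq_subr _ _) kn').
    rewrite -[RHS]mulr1 -[X in _ * X]I1 mulr_sumr.
    apply: eq_bigr => r _.
    have -> : ((bsize l + bsize r).+1 == k.+1) = (bsize r == k - bsize l)%N.
      by rewrite eqSS; apply/eqP/eqP => [<-|->]; [rewrite addKn | rewrite subnKC // -ltnS].
    case: eqP => [hr|]; last by rewrite if_same mulr0.
    have -> : (bsize l + bsize r <= n)%N by rewrite hr subnKC // -ltnS.
    have e : (bsize l + bsize r = k)%N by rewrite hr subnKC // -ltnS.
    by rewrite e !natrM !invfM.

  rewrite big1 // => r _.
  case: ifP => // _; rewrite eqSS; case: eqP => // e.
  move: hl; rewrite -e; lia.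
rewrite group_lt.
transitivity (\sum_(a < k.+1) k.+1%:R^-1 : R).
  apply: eq_bigr => a _.
  have ha : (a <= n)%N by have := ltn_ord a; lia.
  have I1 := IH a ha.
  rewrite -[RHS]mulr1 -[X in _ * X]I1 mulr_sumr.
  by apply: eq_bigr => l _; case: ifP; rewrite ?mulr0.
rewrite sumr_const card_ord -[_ *+ _]mulr_natr mulVf // pnatr_eq0 //.
Qed.

Lemma tele {R : realType} (L : R) : 0 <= L -> forall N : nat,
  \sum_(a < N) (if L <= a%:R then ((a%:R + 1) * (a%:R + 2))^-1 else 0)
  + (if L <= N%:R then (N%:R + 1)^-1 else (L + 1)^-1) <= (L + 1)^-1.
Proof.
move=> L0; elim=> [|N IH].
  rewrite big_ord0 add0r; case: ifP => // h.
  have -> : L = 0 by apply/eqP; rewrite eq_le h L0.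
  by rewrite add0r.
rewrite big_ord_recr /=.
have N0 := ler0n R N.
have LN1 : (L + 1)^-1 > 0 by rewrite invr_gt0; lra.
case: ifP => h1 in IH *.
  have -> : L <= N.+1%:R by rewrite -natr1; lra.
  have E : ((N%:R + 1) * (N%:R + 2))^-1 + (N.+1%:R + 1)^-1 = (N%:R + 1)^-1 :> R.
    by rewrite -natr1; field; apply/andP; split; apply: lt0r_neq0; lra.
  lra.
rewrite addr0.
case: ifP => h2.
  have : (N.+1%:R + 1)^-1 <= (L + 1)^-1 :> R.
    by rewrite lef_pV2 ?posrE -?natr1; lra.
  lra.
lra.
Qed.

Lemma final_real {R : realType} (n : nat) : (2 <= n)%N ->
  2 * n.+1%:R * (log4 (n%:R : R) + 1)^-1 + 1 <= (4 * ln 4 + 1) * (n%:R / ln (n%:R : R)).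
Proof.
move=> n2.
have n2R : (2 : R) <= n%:R by rewrite (ler_nat R 2 n).
have a0 : 0 < ln (n%:R : R) by apply: ln_gt0; lra.
have b0 : 0 < ln (4 : R) by apply: ln_gt0; lra.
have an : ln (n%:R : R) < n%:R by apply: ln_sublinear; lra.
have -> : n.+1%:R = n%:R + 1 :> R by rewrite -natr1.
rewrite /log4.
set a := ln (n%:R : R) in a0 an *; set b := ln (4 : R) in b0 *.
set x := n%:R in n2R an *.
have -> : (a / b + 1)^-1 = b / (a + b).
  by field; apply/andP; split; apply: lt0r_neq0; lra.
set q := x / a.
have qa : q * a = x by rewrite /q mulfVK //; apply: lt0r_neq0.
have q0 : 0 <= q by rewrite /q divr_ge0 //; lra.
have q1 : 1 <= q by rewrite /q ler_pdivlMr // mul1r; lra.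
have key1 : 2 * (x + 1) * (b / (a + b)) <= 4 * b * q.
  rewrite mulrA ler_pdivrMr; last lra.
  have : 0 <= b * b * q by apply: mulr_ge0 => //; apply: mulr_ge0; lra.
  nra.
lra.
Qed.

Theorem proposition3p8 (R : realType) (S : btree -> nat -> R)
  (HS : forall t, (1 <= bsize t)%N -> is_S_t t (S t)) :
  exists C : R, exists N : nat, forall n : nat, (N <= n)%N ->
    `| \sum_(t <- trees_le n | (1 <= bsize t)%N && (log4 (n%:R : R) <= (bsize t)%:R))
         (1 - S t n / Tcoef n) |
    <= C * (n%:R / ln (n%:R : R)).
Proof.
exists (4 * ln 4 + 1), 2%N => n n2.
have n1 : (1 <= n)%N by apply: leq_trans n2.
have Tn : Tcoef n = 1 :> R by rewrite /Tcoef; case: n n2 {n1}.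
set L := log4 (n%:R : R).
have L0 : 0 <= L.
  rewrite /L /log4 divr_ge0 // ln_ge0 //; last lra.
  by rewrite (ler_nat R 1 n).
pose P' (a : nat) := (1 <= a)%N && (L <= a%:R).
pose u (a : nat) : R := 2 * n.+1%:R / (a.+1%:R * a.+2%:R) + (if a == n then 1 else 0).
pose G (t : btree) : R := if P' (bsize t) then (hook t)%:R^-1 * u (bsize t) else 0.
apply: (le_trans (ler_norm_sum _ _ _)).
apply: (@le_trans _ _ (\sum_(t <- trees_le n) (if (bsize t < n.+1)%N then G t else 0))).
  rewrite big_mkcond; apply: ler_sum => t _.
  have u0 a : 0 <= u a.
    by apply: addr_ge0; [apply: divr_ge0 | case: ifP].
  have G0 : 0 <= G t by rewrite /G; case: ifP => // _; apply: mulr_ge0.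
  case: ifP => [/andP[h1 hL]|_]; last by case: ifP.
  rewrite /G /P'.
  have /andP[d0 d1] := per_tree h1 (HS t h1) n1.
  rewrite Tn divr1 ger0_norm // hL h1 /=.
  case: ltnP => hk.
    apply: (le_trans d1); apply: ler_pM.
    - exact: wt_ge0.
    - exact: hfun_ge0.
    - exact: wt_le_hook.
    rewrite /hfun /u.
    have -> : (n < bsize t)%N = false by rewrite ltnNge -ltnS hk.
    rewrite eq_sym; case: eqP => [_|_]; first by rewrite lerDr; apply: divr_ge0.
    by rewrite addr0.
  by move: d1; rewrite /hfun hk mulr0.
rewrite group_lt.
apply: (@le_trans _ _ (\sum_(a < n.+1) (if P' a then u a else 0))).
  apply: ler_sum => a _.
  have ha : (a <= n)%N by have := ltn_ord a; lia.
  have I1 := A_eq (R:=R) ha.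
  rewrite -[X in _ <= X]mulr1 -[X in _ * X]I1 mulr_sumr.
  apply: ler_sum => t _; rewrite /G.
  case: eqP => [->|_]; last by rewrite mulr0.
  by case: ifP; rewrite ?mul0r // mulrC.
apply: le_trans (final_real (R:=R) n2); rewrite -/L.
pose Tl : R := \sum_(a < n.+1) (if L <= a%:R then ((a%:R + 1) * (a%:R + 2))^-1 else 0).
have T := tele L0 n.+1; rewrite -/Tl in T.
have Tle : Tl <= (L + 1)^-1.
  have : 0 <= (if L <= n.+1%:R then (n.+1%:R + 1)^-1 else (L + 1)^-1 : R).
    case: ifP => _; rewrite invr_ge0 //; last lra.
  move=> ?; lra.
have n1R : (0 : R) <= 2 * n.+1%:R by apply: mulr_ge0.
apply: (@le_trans _ _ (2 * n.+1%:R * Tl + 1)); last first.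
  by rewrite lerD2r; apply: ler_wpM2l.
have S1 := sum_ind (R:=R) n n.+1 1; rewrite ltnSn in S1.
rewrite -[X in _ <= _ + X]S1 /Tl mulr_sumr -big_split /=.
apply: ler_sum => a _.
have hp : 0 <= ((a%:R + 1) * (a%:R + 2))^-1 :> R.
  by rewrite invr_ge0; apply: mulr_ge0; have := ler0n R a; lra.
rewrite /P' /u; case: ifP => [/andP[_ ->]|_].
  have -> : (a.+1%:R * a.+2%:R : R) = (a%:R + 1) * (a%:R + 2).
    by rewrite -natr1 -addn2 natrD.
  by rewrite eq_sym.
apply: addr_ge0; last by case: ifP.
by case: ifP => _; rewrite ?mulr0 //; apply: mulr_ge0.
Qed.
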